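(* Let $f(\mathbf{x}) = \sum_{t=1}^T f_t(\mathbf{x})$ be a convex function on $\mathbb{R}^n$ whose components $f_t$ are all convex, and let $\mathbf{x}^*$ be a minimizer of $f$. Suppose $f$ is minimized by SGD, processing one component gradient $\nabla f_t$ per step, with the algorithm replicated across $P$ workers that synchronize at every step, under the Insignificance-bounded Synchronous Parallel (ISP) consistency model described in the context. The update at step $t$ is $\mathbf{u}_t := -\eta_t \nabla f_t(\widetilde{\mathbf{x}}_t)$, where $\widetilde{\mathbf{x}}_t = (\widetilde{x}_{1,t},\dots,\widetilde{x}_{n,t})$ is the noisy state seen by the worker performing step $t$ and the step size is $\eta_t = \eta/\sqrt{t}$ for a constant $\eta>0$. The per-parameter significance filter is $\left|\delta_{i,t}/\widetilde{x}_{i,t}\right| > v_t$, where $\delta_{i,t} := \sum_{t'=t_{p_i}}^{t} u_{i,t'}$ is the accumulated update of the $i$-th parameter since its last propagation time $t_{p_i}$, and the threshold is $v_t = v/\sqrt{t}$ for a constant $v \ge 0$. Assume the $f_t$ are $L$-Lipschitz and that $D(\mathbf{x},\mathbf{x}') := \tfrac12\|\mathbf{x}-\mathbf{x}'\|^2 \le \Delta^2$ for all $\mathbf{x},\mathbf{x}'$ in the parameter space, for some constant $\Delta$. Then the regret \[ R[X] := \sum_{t=1}^T \big( f_t(\widetilde{\mathbf{x}}_t) - f_t(\mathbf{x}^* ) \big) = \mathcal{O}\big(\sqrt{T}\big), \] and consequently $\lim_{T\to\infty} R[X]/T = 0$.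
   Context: ISP consistency model: each worker keeps a local replica of the model. After computing its update at a step, a worker adds it to its local accumulated update for each parameter; for parameter $i$, if the accumulated update $\delta_{i,t}$ (sum of that worker's updates to parameter $i$ since it last propagated parameter $i$, at time $t_{p_i}$) satisfies $|\delta_{i,t}/\widetilde{x}_{i,t}| > v_t$, it is significant and is broadcast to (and applied by) all other workers, and the accumulation restarts; otherwise it remains local to the worker. Steps are ordered as follows: step $t$ is performed by worker $p = t \bmod P$ at logical clock $c = \lfloor t/P \rfloor$, and $\mathbf{u}_t =: \mathbf{u}_{p,c}$. The noisy view of worker $p$ at clock $c$ is $\widetilde{\mathbf{x}}_{p,c} = \mathbf{x}_0 + \sum_{c'=0}^{c} \mathbf{u}_{p,c'} + \sum_{p'\neq p}\sum_{i\in\mathcal{S}_{p',c}} \mathbf{u}_i$, where $\mathbf{x}_0$ is the initial parameter vector and $\mathcal{S}_{p',c}$ is the set of significant updates propagated by worker $p'$ up through clock $c$; $\widetilde{\mathbf{x}}_t := \widetilde{\mathbf{x}}_{t \bmod P,\lfloor t/P\rfloor}$. $\|\cdot\|$ is the Euclidean norm. $L$-Lipschitz is used in the sense that gradients satisfy $\|\nabla f_t\|\le L$. *)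

(* Defs.v *)
From HB Require Import structures.
From mathcomp Require Import all_boot all_order all_algebra.
From mathcomp Require Import all_classical all_reals all_analysis.
Set Implicit Arguments. Unset Strict Implicit. Unset Printing Implicit Defensive.
Import Order.TTheory GRing.Theory Num.Theory.
Import numFieldNormedType.Exports.
Local Open Scope ring_scope.

Section ISP.
Variables (R : realType) (n : nat).
Local Notation vec := 'rV[R]_n.

Definition dotv (x y : vec) : R := \sum_(i < n) x 0 i * y 0 i.
Definition enorm (x : vec) : R := Num.sqrt (dotv x x).

Definition Dist (x y : vec) : R := 2^-1 * enorm (x - y) ^+ 2.

Definition convex_fun (h : vec -> R) : Prop :=
  forall (x y : vec) (l : R), 0 <= l -> l <= 1 ->
    h (l *: x + (1 - l) *: y) <= l * h x + (1 - l) * h y.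

Definition is_gradient (h : vec -> R) (gr : vec -> vec) : Prop :=
  forall x w : vec, derivable h x w /\ 'D_w h x = dotv (gr x) w.

(* State after some number of steps: for each worker p (a nat, only
   p < P is used), its local replica [view p] and its pending (not yet
   propagated) accumulated update [acc p] for every parameter. *)
Record isp_state := ISPState { view : nat -> vec; acc : nat -> vec }.

Variables (P : nat) (x0 : vec) (grad : nat -> vec -> vec) (eta v : R).

Definition step_size (t : nat) : R := eta / Num.sqrt (t%:R).
Definition threshold (t : nat) : R := v / Num.sqrt (t%:R).

(* Step t (t >= 1) is performed by worker t mod P, reading its replica
   xt (the noisy view x~_t), computing u_t = - eta_t grad f_t (xt),
   applying u_t locally, adding it to its accumulators, and broadcasting
   (to all other workers) exactly those accumulated coordinates i with
   |delta_i / x~_{i,t}| > v_t, written |delta_i| > v_t |x~_{i,t}| (so a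
   zero coordinate of the view makes any nonzero delta significant);
   broadcast accumulators are reset to 0. *)
Definition isp_step (t : nat) (s : isp_state) : isp_state :=
  let p := (t %% P)%N in
  let xt := view s p in
  let u := - (step_size t) *: grad t xt in
  let a := acc s p + u in
  let sig (i : 'I_n) := threshold t * `|xt 0 i| < `|a 0 i| in
  ISPState
    (fun q => if q == p then view s p + u
              else view s q + \row_i (if sig i then a 0 i else 0))
    (fun q => if q == p then \row_i (if sig i then 0 else a 0 i)
              else acc s q).

Definition isp_init : isp_state := ISPState (fun _ => x0) (fun _ => 0).

Fixpoint isp_after (k : nat) : isp_state :=
  match k with
  | O => isp_init
  | S k' => isp_step k'.+1 (isp_after k')
  end.

Definition noisy (t : nat) : vec := view (isp_after t.-1) (t %% P)%N.

Definition upd (t : nat) : vec := - (step_size t) *: grad t (noisy t).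

Definition true_state (t : nat) : vec := x0 + \sum_(1 <= s < t) upd s.

Definition regret (f : nat -> vec -> R) (T : nat) (xs : vec) : R :=
  \sum_(1 <= t < T.+1) (f t (noisy t) - f t xs).

End ISP.

(* Main.v *)
Require Import Defs.
From HB Require Import structures.
From mathcomp Require Import all_boot all_order all_algebra.
From mathcomp Require Import all_classical all_reals all_analysis.
From mathcomp Require Import lra ring zify.
Import Order.TTheory GRing.Theory Num.Theory.
Import numFieldNormedType.Exports.
Local Open Scope classical_set_scope.
Local Open Scope ring_scope.

Section Dot.
Variables (R : realType) (n : nat).
Implicit Types x y z : 'rV[R]_n.

Lemma dotvDr x y z : dotv x (y + z) = dotv x y + dotv x z.
Proof. by rewrite /dotv -big_split; apply: eq_bigr => i _; rewrite mxE mulrDr. Qed.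

Lemma dotvNr x y : dotv x (- y) = - dotv x y.
Proof. by rewrite /dotv -sumrN; apply: eq_bigr => i _; rewrite mxE mulrN. Qed.

Lemma dotv_ge0 x : 0 <= dotv x x.
Proof. by apply: sumr_ge0 => i _; rewrite -expr2 sqr_ge0. Qed.

Lemma dotv_expand y g c :
  dotv (y + c *: g) (y + c *: g) = dotv y y + 2 * c * dotv g y + c ^+ 2 * dotv g g.
Proof.
rewrite /dotv !mulr_sumr -!big_split; apply: eq_bigr => i _; rewrite !mxE /=; ring.
Qed.

Lemma Dist_dot x y : Dist x y = 2^-1 * dotv (x - y) (x - y).
Proof. by rewrite /Dist /enorm sqr_sqrtr // dotv_ge0. Qed.

Lemma coord_sq_le x i : (x 0 i) ^+ 2 <= dotv x x.
Proof.
rewrite /dotv (bigD1 i) //= -expr2 lerDl; apply: sumr_ge0 => j _.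
by rewrite -expr2 sqr_ge0.
Qed.

Lemma coord_le_norm x i L : enorm x <= L -> `|x 0 i| <= L.
Proof.
move=> h; apply: le_trans h; rewrite /enorm -sqrtr_sqr ler_sqrt ?dotv_ge0 //.
exact: coord_sq_le.
Qed.

Lemma dot_le_sq x L : enorm x <= L -> dotv x x <= L ^+ 2.
Proof.
move=> h; have h0 : 0 <= enorm x by apply: sqrtr_ge0.
rewrite -(sqr_sqrtr (dotv_ge0 x)) -/(enorm x).
by apply: ler_pM.
Qed.

Lemma dot_bound x y L B : (forall i, `|x 0 i| <= L) -> (forall i, `|y 0 i| <= B) ->
  dotv x y <= n%:R * (L * B).
Proof.
move=> hx hy; rewrite /dotv.
apply: le_trans (_ : \sum_(i < n) (L * B) <= _).
  apply: ler_sum => i _; apply: le_trans (ler_norm _) _; rewrite normrM.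
  by apply: ler_pM => //.
by rewrite sumr_const card_ord mulr_natl.
Qed.

End Dot.

Lemma deriv_le (R : realType) n (h : 'rV[R]_n -> R) x w :
  convex_fun h -> derivable h x w -> 'D_w h x <= h (x + w) - h x.
Proof.
move=> cvx dh; rewrite /derive.
set g := (fun s : R => _).
have gr : g @ 0^'+ --> lim (g @ 0^').
  apply: cvg_trans dh => A /=; rewrite /nbhs /= => -[e e0 He].
  exists e => // y /= ey y0; apply: He => //; rewrite gt_eqF //.
apply: (cvgr_to_le gr); near=> s.
have s0 : 0 < s by near: s; exact: nbhs_right_gt.
have s1 : s <= 1 by near: s; apply: nbhs_right_le; exact: ltr01.
rewrite /g /= ler_pdivrMl // .
have := cvx (x + w) x s (ltW s0) s1.
have -> : s *: (x + w) + (1 - s) *: x = s *: w + x.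
  by rewrite scalerDr scalerBl scale1r addrC addrA subrK addrC.
rewrite [x + w]addrC; lra.
Unshelve. all: by end_near.
Qed.

Lemma first_order (R : realType) n (h : 'rV[R]_n -> R) gr x y :
  convex_fun h -> is_gradient h gr -> h x - h y <= - dotv (gr x) (y - x).
Proof.
move=> cvx hg; have [d e] := hg x (y - x).
have := @deriv_le R n h x (y - x) cvx d.
have -> : x + (y - x) = y by rewrite addrC subrK.
rewrite e; lra.
Qed.

Section ISPproof.
Variables (R : realType) (n P : nat) (grad : nat -> 'rV[R]_n -> 'rV[R]_n)
  (x0 : 'rV[R]_n) (eta v : R).
Hypothesis P0 : (0 < P)%N.
Local Notation st k := (isp_after P x0 grad eta v k).
Local Notation U := (upd P x0 grad eta v).
Local Notation TS := (true_state P x0 grad eta v).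
Local Notation NZ := (noisy P x0 grad eta v).

Lemma sum_if (F : nat -> 'rV[R]_n) p X : (p < P)%N ->
  \sum_(r < P) (if (r : nat) == p then X else F r) = \sum_(r < P) F r - F p + X.
Proof.
move=> pP; rewrite (bigD1 (Ordinal pP)) //= eqxx.
rewrite [in RHS](bigD1 (Ordinal pP)) //=.
rewrite (eq_bigr (fun r : 'I_P => F r)); last first.
  by move=> i hi; have -> : ((i : nat) == p) = false by apply/negbTE; exact: hi.
by rewrite [F p + _]addrC addrK addrC.
Qed.

Lemma TS_rec k : TS k.+2 = TS k.+1 + U k.+1.
Proof. by rewrite /true_state big_nat_recr //= addrA. Qed.

Lemma view_inv k q : (q < P)%N ->
  view (st k) q = TS k.+1 - \sum_(r < P) acc (st k) r + acc (st k) q.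
Proof.
elim: k q => [|k IH] q qP.
  rewrite /= /true_state big_geq // big1 // addr0 subr0 addr0 //.
rewrite TS_rec.
have pP : ((k.+1 %% P) < P)%N by rewrite ltn_pmod.
change (st k.+1) with (isp_step P grad eta v k.+1 (st k)).
rewrite /isp_step /=.
set p := (k.+1 %% P)%N.
set s := st k.
set u := - step_size eta k.+1 *: grad k.+1 (view s p).
have eU : U k.+1 = u by [].
rewrite eU (sum_if (acc s) p _ pP).
have IHp : view s p = TS k.+1 - \sum_(r < P) acc s r + acc s p by exact: IH.
have IHq : view s q = TS k.+1 - \sum_(r < P) acc s r + acc s q by exact: IH.
case: ifP => Hq.
  by rewrite IHp; apply/rowP => i; rewrite !mxE; lra.
rewrite IHq; apply/rowP => i; rewrite !mxE; case: ifP => _; lra.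
Qed.

Variable M : R.
Hypothesis v0 : 0 <= v.
Hypothesis M0 : 0 <= M.
Hypothesis HM : forall k p, (p < P)%N -> forall i, `|view (st k) p 0 i| <= M.


Lemma acc_inv k r : (r < P)%N -> (forall i, acc (st k) r 0 i = 0) \/
  exists s, [/\ (1 <= s)%N, (s %% P = r)%N, (k < s + P)%N &
    forall i, `|acc (st k) r 0 i| <= v / Num.sqrt (s%:R) * M].
Proof.
elim: k r => [|k IH] r rP.
  by left => i; rewrite /= mxE.
have pP : ((k.+1 %% P) < P)%N by rewrite ltn_pmod.
change (st k.+1) with (isp_step P grad eta v k.+1 (st k)).
rewrite /isp_step /=.
set p := (k.+1 %% P)%N.
set s := st k.
case: ifP => Hr.
  right; exists k.+1; split => //.
  - by move/eqP: Hr.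
  - lia.
  move=> i; rewrite mxE; case: ifP => hs.
    rewrite normr0; apply: mulr_ge0; last exact: M0.
    by apply: divr_ge0 => //; apply: sqrtr_ge0.
  move/negbT: hs; rewrite -leNgt => hs; apply: le_trans hs _.
  rewrite /threshold; apply: ler_wpM2l; last exact: HM.
  by apply: divr_ge0 => //; apply: sqrtr_ge0.
have [h|[s0 [s1 sr ks hb]]] := IH r rP; first by left.
right; exists s0; split => //.
have : k.+1 != (s0 + P)%N.
  apply/eqP => e; move/negbT: Hr; rewrite /p e modnDr sr eqxx //.
lia.
Qed.

Lemma acc_bound k r i : (r < P)%N ->
  `|acc (st k) r 0 i| <= v * M * Num.sqrt (P.+1%:R) / Num.sqrt (k.+1%:R).
Proof.
have hk : 0 < Num.sqrt (k.+1%:R : R) by rewrite sqrtr_gt0 ltr0Sn.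
move=> rP; have [h|[s [s1 sr ks hb]]] := acc_inv k r rP.
  rewrite h normr0; apply: divr_ge0; last exact: sqrtr_ge0.
  by apply: mulr_ge0; [exact: mulr_ge0 v0 M0|exact: sqrtr_ge0].
apply: le_trans (hb i) _.
rewrite (mulrAC v) -[v * M * _ / _]mulrA; apply: ler_wpM2l; first exact: mulr_ge0 v0 M0.
rewrite ler_pdivlMr // mulrC ler_pdivrMr; last by rewrite sqrtr_gt0 ltr0n.
rewrite -sqrtrM // ler_sqrt // -natrM ler_nat.
nia.
Qed.

Lemma noisy_dev k i :
  `|(NZ k.+1 - TS k.+1) 0 i| <= P.+1%:R * (v * M * Num.sqrt (P.+1%:R) / Num.sqrt (k.+1%:R)).
Proof.
set B := (v * M * _ / _).
have pP : ((k.+1 %% P) < P)%N by rewrite ltn_pmod.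
rewrite /noisy /= (view_inv k _ pP) !mxE.
set A := acc _ _ 0 i; set S := (\sum_(r < P) acc (st k) r) 0 i; set T := x0 0 i + _.
have -> : T - S + A - T = A - S by ring.
have hA : `|A| <= B by exact: acc_bound.
have hS : `|S| <= P%:R * B.
  rewrite /S summxE; apply: le_trans (ler_norm_sum _ _ _) _.
  apply: le_trans (_ : \sum_(r < P) B <= _).
    by apply: ler_sum => r _; exact: acc_bound.
  by rewrite sumr_const card_ord mulr_natl.
apply: le_trans (ler_normB _ _) _.
rewrite -addn1 natrD; lra.
Qed.

Lemma step_bound (f : nat -> 'rV[R]_n -> R) (L : R) (xs : 'rV[R]_n) k :
  0 < eta -> 0 <= L ->
  convex_fun (f k.+1) -> is_gradient (f k.+1) (grad k.+1) ->
  (forall x, enorm (grad k.+1 x) <= L) ->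
  f k.+1 (NZ k.+1) - f k.+1 xs <=
  (dotv (TS k.+1 - xs) (TS k.+1 - xs) - dotv (TS k.+2 - xs) (TS k.+2 - xs))
     * (2 * eta)^-1 * Num.sqrt (k.+1%:R)
  + (eta * L ^+ 2 / 2 + n%:R * L * P.+1%:R * (v * M * Num.sqrt (P.+1%:R)))
     / Num.sqrt (k.+1%:R).
Proof.
move=> eta0 L0 cvx hg hL.
set r := Num.sqrt (k.+1%:R).
have r0 : 0 < r by rewrite sqrtr_gt0 ltr0Sn.
set W := v * M * _.
set x := NZ k.+1; set g := grad k.+1 x; set y := TS k.+1 - xs; set d := x - TS k.+1.
have h1 := @first_order R n (f k.+1) (grad k.+1) x xs cvx hg.
have e1 : xs - x = - (d + y).
  by apply/rowP => j; rewrite /d /y !mxE; lra.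
rewrite e1 dotvNr opprK dotvDr in h1.
have h2 : dotv g d <= n%:R * (L * (P.+1%:R * (W / r))).
  apply: dot_bound => j; first exact: coord_le_norm (hL _).
  exact: noisy_dev.
set st := step_size eta k.+1.
have e3 : dotv (TS k.+2 - xs) (TS k.+2 - xs) =
    dotv y y + 2 * (- st) * dotv g y + (- st) ^+ 2 * dotv g g.
  have eU : U k.+1 = (- st) *: g by [].
  rewrite -dotv_expand TS_rec eU; have -> : TS k.+1 + (- st) *: g - xs = y + (- st) *: g by rewrite /y addrAC.
  done.
have hgg : dotv g g <= L ^+ 2 by apply: dot_le_sq; apply: hL.
rewrite e3 -/y.
have est : st = eta / r by [].
rewrite est.
have eR : (dotv y y - (dotv y y + 2 * - (eta / r) * dotv g y + (- (eta / r)) ^+ 2 * dotv g g))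
     * (2 * eta)^-1 * r + (eta * L ^+ 2 / 2 + n%:R * L * P.+1%:R * W) / r
   = dotv g y + eta / (2 * r) * (L ^+ 2 - dotv g g) + n%:R * (L * (P.+1%:R * (W / r))).
  field; apply/andP; split; apply: lt0r_neq0 => //.
rewrite eR.
have : 0 <= eta / (2 * r) * (L ^+ 2 - dotv g g).
  apply: mulr_ge0; last by lra.
  by apply: divr_ge0; [exact: ltW | apply: mulr_ge0 => //; exact: ltW].
lra.
Qed.

End ISPproof.

Lemma telesc (R : realType) (a : nat -> R) (c K D : R) :
  0 < c -> 0 <= K -> (forall t, (1 <= t)%N -> a t <= D) -> forall T,
  \sum_(1 <= t < T.+1) ((a t - a t.+1) * c * Num.sqrt (t%:R) + K / Num.sqrt (t%:R))
  <= (c * D + 2 * K) * Num.sqrt (T%:R) - c * a T.+1 * Num.sqrt (T%:R).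
Proof.
move=> c0 K0 aD; elim=> [|T IH].
  by rewrite big_geq // sqrtr0 !mulr0 subrr.
rewrite big_nat_recr //=.
set A := Num.sqrt (T%:R : R) in IH *; set B := Num.sqrt (T.+1%:R : R).
have A0 : 0 <= A by apply: sqrtr_ge0.
have B0 : 0 < B by rewrite sqrtr_gt0 ltr0Sn.
have AB : A <= B by rewrite ler_sqrt // ler_nat.
have eB : B ^+ 2 = A ^+ 2 + 1.
  by rewrite !sqr_sqrtr // -?natr1 // ?ler0n.
have hB : B^-1 <= 2 * (B - A).
  rewrite -div1r ler_pdivrMr //; nra.
have hK : K / B <= K * (2 * (B - A)) by apply: ler_wpM2l.
have ha := aD T.+1 isT.
have : 0 <= c * ((D - a T.+1) * (B - A)).
  by apply: mulr_ge0; [exact: ltW | apply: mulr_ge0; lra].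
nra.
Qed.

Lemma le_sum_abs (R : realType) n (x : 'rV[R]_n) i : `|x 0 i| <= \sum_(j < n) `|x 0 j|.
Proof. by rewrite (bigD1 i) //= lerDl; apply: sumr_ge0 => j _. Qed.

Lemma abs_le_sq (R : realType) (z : R) : `|z| <= 1 + z ^+ 2.
Proof. by case: (lerP 0 z) => hz; [rewrite ger0_norm // | rewrite ltr0_norm //]; nra. Qed.

Theorem theorem1 (R : realType) (n P : nat) (f : nat -> 'rV[R]_n -> R)
  (grad : nat -> 'rV[R]_n -> 'rV[R]_n) (x0 : 'rV[R]_n)
  (eta v L Delta : R) (X : set 'rV[R]_n) :
  (0 < P)%N ->
  0 < eta -> 0 <= v ->
  (forall t, (1 <= t)%N -> convex_fun (f t)) ->
  (forall t, (1 <= t)%N -> is_gradient (f t) (grad t)) ->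
  (forall t x, (1 <= t)%N -> enorm (grad t x) <= L) ->
  (forall x y, X x -> X y -> Dist x y <= Delta ^+ 2) ->
  (* every model state produced by the algorithm lies in the parameter space:
     all workers' replicas at all times and the global states *)
  (forall k p, (p < P)%N -> X (view (isp_after P x0 grad eta v k) p)) ->
  (forall t, (1 <= t)%N -> X (true_state P x0 grad eta v t)) ->
  exists C : R,
    (forall (T : nat) (xs : 'rV[R]_n), (1 <= T)%N -> X xs ->
       (forall y, \sum_(1 <= t < T.+1) f t xs <= \sum_(1 <= t < T.+1) f t y) ->
       regret P x0 grad eta v f T xs <= C * Num.sqrt (T%:R))
    /\
    (forall xs : nat -> 'rV[R]_n,
       (forall T, (1 <= T)%N -> X (xs T) /\
          forall y, \sum_(1 <= t < T.+1) f t (xs T) <= \sum_(1 <= t < T.+1) f t y) ->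
       forall eps : R, 0 < eps -> exists N : nat, forall T : nat, (N <= T)%N -> (1 <= T)%N ->
         regret P x0 grad eta v f T (xs T) / T%:R <= eps).
Proof.
move=> P0 eta0 v0 cvx hgr hL hD hV hTS.
have L0 : 0 <= L := le_trans (sqrtr_ge0 _) (hL 1%N x0 isT).
have D0 : 0 <= Delta ^+ 2 := sqr_ge0 _.
set M := \sum_(j < n) `|x0 0 j| + 1 + 2 * Delta ^+ 2.
have M0 : 0 <= M.
  have : 0 <= \sum_(j < n) `|x0 0 j| by apply: sumr_ge0 => j _.
  rewrite /M; lra.
have Xx0 : X x0 by exact: (hV 0%N 0%N P0).
have HM : forall k p, (p < P)%N -> forall i,
    `|view (isp_after P x0 grad eta v k) p 0 i| <= M.
  move=> k p pP i; set y := view _ p.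
  have hd := hD _ _ (hV k p pP) Xx0; rewrite Dist_dot -/y in hd.
  have h1 := @coord_sq_le R n (y - x0) i; rewrite !mxE in h1.
  have h2 := @abs_le_sq R (y 0 i - x0 0 i).
  have h3 := @le_sum_abs R n x0 i.
  have h4 : `|y 0 i| <= `|x0 0 i| + `|y 0 i - x0 0 i|.
    by rewrite -[X in `|X|](subrK (x0 0 i)) addrC ler_normD.
  rewrite /M; lra.
set c := (2 * eta)^-1.
set K := eta * L ^+ 2 / 2 + n%:R * L * P.+1%:R * (v * M * Num.sqrt (P.+1%:R)).
set C := c * (2 * Delta ^+ 2) + 2 * K.
have c0 : 0 < c by rewrite /c invr_gt0; lra.
have K0 : 0 <= K.
  rewrite /K; apply: addr_ge0.
    by apply: divr_ge0 => //; apply: mulr_ge0; [exact: ltW | exact: sqr_ge0].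
  apply: mulr_ge0; first by apply: mulr_ge0 => //; apply: mulr_ge0.
  by apply: mulr_ge0; [exact: mulr_ge0 | exact: sqrtr_ge0].
have C0 : 0 <= C by rewrite /C; nra.
have part1 : forall (T : nat) (xs : 'rV[R]_n), X xs ->
    regret P x0 grad eta v f T xs <= C * Num.sqrt (T%:R).
  move=> T xs Xxs.
  set a := fun t => dotv (true_state P x0 grad eta v t - xs) (true_state P x0 grad eta v t - xs).
  apply: le_trans (_ : \sum_(1 <= t < T.+1)
     ((a t - a t.+1) * c * Num.sqrt (t%:R) + K / Num.sqrt (t%:R)) <= _).
    apply: ler_sum_nat => -[//|k] _.
    apply: (@step_bound R n P grad x0 eta v P0 M v0 M0 HM) => //.
    - exact: cvx.
    - exact: hgr.
    - by move=> x; apply: hL.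
  apply: le_trans (@telesc R a c K (2 * Delta ^+ 2) c0 K0 _ T) _.
    move=> t t1; have := hD _ _ (hTS t t1) Xxs; rewrite Dist_dot /a; lra.
  have : 0 <= c * a T.+1 * Num.sqrt (T%:R).
    apply: mulr_ge0; last exact: sqrtr_ge0.
    by apply: mulr_ge0; [exact: ltW | exact: dotv_ge0].
  rewrite /C; lra.
exists C; split.
  by move=> T xs _ Xxs _; exact: part1.
move=> xs hxs eps eps0.
exists (Num.trunc (C ^+ 2 / eps ^+ 2)).+1 => T NT T1.
have T0 : 0 < (T%:R : R) by rewrite ltr0n.
rewrite ler_pdivrMr //.
apply: le_trans (part1 T (xs T) (hxs T T1).1) _.
set S := Num.sqrt (T%:R : R).
have S0 : 0 <= S by apply: sqrtr_ge0.
have eS : S ^+ 2 = T%:R by rewrite sqr_sqrtr // ler0n.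
have hC : C ^+ 2 < eps ^+ 2 * T%:R.
  have h := truncnS_gt (C ^+ 2 / eps ^+ 2).
  have hN : ((Num.trunc (C ^+ 2 / eps ^+ 2)).+1%:R : R) <= T%:R by rewrite ler_nat.
  have := lt_le_trans h hN.
  by rewrite ltr_pdivrMr ?exprn_gt0 // mulrC.
have hCS : C <= eps * S.
  rewrite -(ger0_norm C0) -sqrtr_sqr.
  have eS0 : 0 <= eps * S by apply: mulr_ge0 => //; exact: ltW.
  rewrite -[X in _ <= X](ger0_norm eS0) -sqrtr_sqr ler_sqrt ?sqr_ge0 //.
  rewrite exprMn eS; exact: ltW.
rewrite -eS; nra.
Qed.
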